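(* Let $(V,F)$ be a near vector space with $(F,\circ)$ commutative, and let $u,v\in Q(V)\setminus\{0\}$. Suppose that for all $n\geq1$ and all $\alpha_1,\dots,\alpha_n\in F$, $$\alpha_1+_u\cdots+_u\alpha_n=0 \iff \alpha_1+_v\cdots+_v\alpha_n=0.$$ Then $+_u=+_v$. (Thus the addition $+_u$ is completely determined by which finite $+_u$-sums of elements of $F$ are zero.)
   Context: An F-group is a pair $(V,F)$ where $(V,+)$ is a group and $F$ is a set of endomorphisms of $V$ such that: the maps $0,1,-1$ lie in $F$; $F\setminus\{0\}$ is a subgroup of $\mathrm{Aut}(V,+)$ under composition; and if $\alpha x=\beta x$ with $\alpha,\beta\in F$, $x\in V$ then $\alpha=\beta$ or $x=0$. The quasi-kernel $Q(V)$ is the set of $u\in V$ such that for all $\alpha,\beta\in F$ there is $\gamma\in F$ with $\alpha u+\beta u=\gamma u$. $(V,F)$ is a near vector space if $Q(V)$ generates $(V,+)$. Commutativity means $\alpha(\beta v)=\beta(\alpha v)$ for all $\alpha,\beta\in F$, $v\in V$. For $u\in Q(V)\setminus\{0\}$, $\alpha+_u\beta$ is the unique $\gamma\in F$ with $\alpha u+\beta u=\gamma u$; $(F,+_u,\circ)$ is a field. *)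

(* Defs.v *)
From Stdlib Require Import List.
Import ListNotations.

Section FGroups.
Variables (V : Type) (add : V -> V -> V) (zero : V) (opp : V -> V).
Variable F : (V -> V) -> Prop.

Definition is_group : Prop :=
  (forall x y w, add x (add y w) = add (add x y) w) /\
  (forall x, add zero x = x) /\ (forall x, add x zero = x) /\
  (forall x, add (opp x) x = zero) /\ (forall x, add x (opp x) = zero).

Definition is_endo (f : V -> V) : Prop :=
  forall x y, f (add x y) = add (f x) (f y).

Definition is_zero_map (f : V -> V) : Prop := forall x, f x = zero.

Definition is_Fgroup : Prop :=
  is_group /\
  (forall f, F f -> is_endo f) /\
  F (fun _ => zero) /\ F (fun x => x) /\ F opp /\
  (* F \ {0} is a subgroup of Aut(V,+) under composition *)
  (forall a b, F a -> F b -> ~ is_zero_map a -> ~ is_zero_map b ->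
     F (fun x => a (b x))) /\
  (forall a, F a -> ~ is_zero_map a ->
     exists b, F b /\ (forall x, b (a x) = x) /\ (forall x, a (b x) = x)) /\
  (forall a b x, F a -> F b -> a x = b x -> (forall y, a y = b y) \/ x = zero).

Definition in_Q (u : V) : Prop :=
  forall a b, F a -> F b -> exists c, F c /\ add (a u) (b u) = c u.

Definition in_generated_by_Q (x : V) : Prop :=
  forall P : V -> Prop,
    (forall u, in_Q u -> P u) -> P zero ->
    (forall y w, P y -> P w -> P (add y w)) ->
    (forall y, P y -> P (opp y)) -> P x.

Definition is_near_vector_space : Prop :=
  is_Fgroup /\ forall x, in_generated_by_Q x.

Definition F_commutative : Prop :=
  forall a b x, F a -> F b -> a (b x) = b (a x).

(* plus_u u a b c  :<->  c = a +_u b, i.e. c ∈ F and a u + b u = c u *)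
Definition plus_u (u : V) (a b c : V -> V) : Prop :=
  F c /\ add (a u) (b u) = c u.

(* sum_u u l c  :<->  c = a_1 +_u (a_2 +_u ( ... +_u a_n)) for l = [a_1;...;a_n],
   n >= 1 (associativity of +_u makes the bracketing irrelevant) *)
Fixpoint sum_u (u : V) (l : list (V -> V)) (c : V -> V) : Prop :=
  match l with
  | [] => False
  | [a] => F c /\ forall y, c y = a y
  | a :: l' => exists d, sum_u u l' d /\ plus_u u a d c
  end.

Definition sum_u_is_zero (u : V) (l : list (V -> V)) : Prop :=
  exists c, sum_u u l c /\ is_zero_map c.

End FGroups.

(* Main.v *)
Require Import Defs.
From Stdlib Require Import List Classical FunctionalExtensionality.
Import ListNotations.

Section Aux.
Variables (V : Type) (add : V -> V -> V) (zero : V) (opp : V -> V)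
  (F : (V -> V) -> Prop).
Hypothesis hF : is_Fgroup V add zero opp F.

Lemma opp_c_in_F (w : V) (hw0 : w <> zero) c : F c -> F (fun x => opp (c x)).
Proof.
  destruct hF as [[hA [h0l [h0r [hNl hNr]]]] [hend [hz [hid [hopp [hcomp [hinv hfpf]]]]]]].
  intro Fc.
  destruct (classic (is_zero_map V zero c)) as [Z|NZ].
  - replace (fun x => opp (c x)) with (fun _ : V => zero). exact hz.
    apply functional_extensionality; intro x. rewrite Z.
    rewrite <- (h0r (opp zero)). now rewrite hNl.
  - apply (hcomp opp c); auto.
    intro Zo. apply hw0. pose proof (hNl w) as H. rewrite (Zo w), h0l in H. exact H.
Qed.

Lemma key (w : V) (hw : in_Q V add F w) (hw0 : w <> zero) a b c :
  F a -> F b -> F c ->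
  (plus_u V add F w a b c <->
   sum_u_is_zero V add zero F w [a; b; fun x => opp (c x)]).
Proof.
  intros Fa Fb Fc.
  pose proof (opp_c_in_F w hw0 c Fc) as Fd'.
  destruct hF as [[hA [h0l [h0r [hNl hNr]]]] [hend [hz [hid [hopp [hcomp [hinv hfpf]]]]]]].
  split.
  - intros [_ E].
    destruct (hw b (fun x => opp (c x)) Fb Fd') as [d [Fd Ed]].
    destruct (hw a d Fa Fd) as [e [Fe Ee]].
    exists e. split.
    + simpl. exists d. split.
      * exists (fun x => opp (c x)). split; [split; auto|split; auto].
      * split; auto.
    + assert (ez : e w = zero).
      { rewrite <- Ee, <- Ed, hA, E. apply hNr. }
      destruct (hfpf e (fun _ => zero) w Fe hz ez) as [H|H]; [exact H|contradiction].
  - intros [e [S Z]]. simpl in S.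
    destruct S as [d [[d0 [[Fd0 Ed0] [Fd Ed]]] [Fe Ee]]].
    split; auto.
    rewrite Ed0 in Ed. rewrite <- Ed, Z, hA in Ee.
    rewrite <- (h0l (c w)). rewrite <- Ee.
    rewrite <- hA, hNl. now rewrite h0r.
Qed.
End Aux.

Theorem mainTheorem7
  (V : Type) (add : V -> V -> V) (zero : V) (opp : V -> V)
  (F : (V -> V) -> Prop)
  (hNVS : is_near_vector_space V add zero opp F)
  (hcomm : F_commutative V F)
  (u v : V)
  (hu : in_Q V add F u) (hu0 : u <> zero)
  (hv : in_Q V add F v) (hv0 : v <> zero)
  (hsums : forall l : list (V -> V), l <> [] -> (forall a, In a l -> F a) ->
     (sum_u_is_zero V add zero F u l <-> sum_u_is_zero V add zero F v l)) :
  forall a b c, F a -> F b -> F c ->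
    (plus_u V add F u a b c <-> plus_u V add F v a b c).
Proof.
  destruct hNVS as [hF _].
  intros a b c Fa Fb Fc.
  rewrite (key V add zero opp F hF u hu hu0 a b c Fa Fb Fc).
  rewrite (key V add zero opp F hF v hv hv0 a b c Fa Fb Fc).
  apply hsums. discriminate.
  intros x [<-|[<-|[<-|[]]]]; auto.
  exact (opp_c_in_F V add zero opp F hF u hu0 c Fc).
Qed.
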